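(* Let $\{G^k\}$ be a $B$-strongly connected sequence of digraphs on $\{1,\dots,I\}$, let each $\mathbf{A}^k$ be compliant with $G^k$ (constant $\kappa>0$) and column stochastic, and let $\{\mathbf{u}_i^k\}_{k\ge0}\subset\mathbb{R}^m$, $i=1,\dots,I$, be signals. Consider the tracking protocol with $\phi_{(i)}^0=1$, $\mathbf{x}_{(i)}^0=\mathbf{u}_i^0$ and $$\phi_{(i)}^{k+1}=\sum_ja_{ij}^k\phi_{(j)}^k,\quad \mathbf{x}_{(i)}^{k+1}=\frac{1}{\phi_{(i)}^{k+1}}\sum_ja_{ij}^k\phi_{(j)}^k\mathbf{x}_{(j)}^k+\frac{1}{\phi_{(i)}^{k+1}}(\mathbf{u}_i^{k+1}-\mathbf{u}_i^k).$$ Then (a) $\sum_{i=1}^I\phi_{(i)}^k\mathbf{x}_{(i)}^k=\sum_{i=1}^I\mathbf{u}_i^k$ for all $k$; (b) if moreover $\lim_{k\to\infty}\|\mathbf{u}_i^{k+1}-\mathbf{u}_i^k\|=0$ for all $i$, then $\lim_{k\to\infty}\|\mathbf{x}_{(i)}^k-\bar{\mathbf{u}}^k\|=0$ for all $i$, where $\bar{\mathbf{u}}^k\triangleq\frac1I\sum_{i=1}^I\mathbf{u}_i^k$.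
   Context: A digraph at time $k$ is $G^k=(V,E^k)$, $V=\{1,\dots,I\}$, with edge $(j,i)\in E^k$ meaning $j$ can send to $i$. The sequence is $B$-strongly connected if there is an integer $B>0$ such that for every $k$ the digraph with edge set $\bigcup_{t=k}^{k+B-1}E^t$ is strongly connected. $\mathbf{A}^k$ is compliant with $G^k$ (constant $\kappa>0$) if $a_{ij}^k=0$ whenever $j\ne i$ and $(j,i)\notin E^k$, $a_{ij}^k\ge\kappa$ whenever $(j,i)\in E^k$, and $a_{ii}^k\ge\kappa$; it is column stochastic if its entries are nonnegative and $\mathbf{1}^T\mathbf{A}^k=\mathbf{1}^T$. *)

(* Defs.v *)
From Stdlib Require Import Reals.
Open Scope R_scope.

(* Vertices are 0..I-1 (paper: 1..I).  Vectors in R^m are functions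
   nat -> R, only coordinates 0..m-1 matter. *)

Fixpoint rsum (n : nat) (f : nat -> R) : R :=
  match n with
  | O => 0
  | S n' => rsum n' f + f n'
  end.

Definition vnorm (m : nat) (v : nat -> R) : R :=
  sqrt (rsum m (fun c => v c * v c)).

(* A time-varying digraph: E k j i  means (j,i) in E^k, j can send to i. *)
Definition digraph_seq := nat -> nat -> nat -> Prop.

Inductive reach (I : nat) (e : nat -> nat -> Prop) : nat -> nat -> Prop :=
  | reach_refl : forall a, (a < I)%nat -> reach I e a a
  | reach_step : forall a b c, reach I e a b -> (c < I)%nat -> e b c ->
                 reach I e a c.

Definition strongly_connected (I : nat) (e : nat -> nat -> Prop) : Prop :=
  forall a b, (a < I)%nat -> (b < I)%nat -> reach I e a b.

Definition B_strongly_connected (I : nat) (E : digraph_seq) : Prop :=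
  exists B : nat, (0 < B)%nat /\
    forall k : nat,
      strongly_connected I
        (fun j i => exists t, (k <= t <= k + B - 1)%nat /\ E t j i).

(* A k i j = a_ij^k *)
Definition compliant (I : nat) (kappa : R) (E : digraph_seq)
    (A : nat -> nat -> nat -> R) (k : nat) : Prop :=
  (forall i j, (i < I)%nat -> (j < I)%nat -> j <> i -> ~ E k j i -> A k i j = 0) /\
  (forall i j, (i < I)%nat -> (j < I)%nat -> E k j i -> A k i j >= kappa) /\
  (forall i, (i < I)%nat -> A k i i >= kappa).

Definition column_stochastic (I : nat) (A : nat -> nat -> nat -> R) (k : nat) : Prop :=
  (forall i j, (i < I)%nat -> (j < I)%nat -> 0 <= A k i j) /\
  (forall j, (j < I)%nat -> rsum I (fun i => A k i j) = 1).

(* Main.v *)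
Require Import Defs.
From Stdlib Require Import Reals Lra Lia Classical.
Open Scope R_scope.

Lemma rsum_ext n f g : (forall j, (j < n)%nat -> f j = g j) -> rsum n f = rsum n g.
Proof. induction n; simpl; intros H; auto. rewrite IHn by (intros; apply H; lia). rewrite H by lia. auto. Qed.

Lemma rsum_le n f g : (forall j, (j < n)%nat -> f j <= g j) -> rsum n f <= rsum n g.
Proof. induction n; simpl; intros H; [lra|]. assert (rsum n f <= rsum n g) by (apply IHn; intros; apply H; lia).
 assert (f n <= g n) by (apply H; lia). lra. Qed.

Lemma rsum_plus n f g : rsum n (fun j => f j + g j) = rsum n f + rsum n g.
Proof. induction n; simpl; [lra|]. rewrite IHn. lra. Qed.

Lemma rsum_scal n r f : rsum n (fun j => r * f j) = r * rsum n f.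
Proof. induction n; simpl; [lra|]. rewrite IHn. lra. Qed.

Lemma rsum_opp n f : rsum n (fun j => - f j) = - rsum n f.
Proof. induction n; simpl; [lra|]. rewrite IHn. lra. Qed.

Lemma rsum_const n a : rsum n (fun _ => a) = INR n * a.
Proof. induction n; simpl rsum; [simpl; lra|]. rewrite IHn, S_INR. lra. Qed.

Lemma rsum_zero n : rsum n (fun _ => 0) = 0.
Proof. rewrite rsum_const. lra. Qed.

Lemma rsum_exchange n p (f : nat -> nat -> R) :
  rsum n (fun i => rsum p (fun j => f i j)) = rsum p (fun j => rsum n (fun i => f i j)).
Proof. induction n; simpl.
 - symmetry. apply rsum_zero.
 - rewrite IHn, <- rsum_plus. auto. Qed.

Lemma rsum_nonneg n f : (forall j, (j < n)%nat -> 0 <= f j) -> 0 <= rsum n f.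
Proof. intros H. rewrite <- (rsum_zero n). apply rsum_le. auto. Qed.

Lemma rsum_ge_term n f j : (forall j, (j < n)%nat -> 0 <= f j) -> (j < n)%nat -> f j <= rsum n f.
Proof. induction n; simpl; intros H Hj; [lia|].
 assert (0 <= rsum n f) by (apply rsum_nonneg; intros; apply H; lia).
 destruct (Nat.eq_dec j n).
 - subst. lra.
 - assert (f j <= rsum n f) by (apply IHn; [intros; apply H; lia| lia]).
   assert (0 <= f n) by (apply H; lia). lra. Qed.

Lemma rsum_abs n f : Rabs (rsum n f) <= rsum n (fun j => Rabs (f j)).
Proof. induction n; simpl. rewrite Rabs_R0; lra.
 eapply Rle_trans. apply Rabs_triang. lra. Qed.

Lemma Rabs_le_bt x a : Rabs x <= a -> - a <= x <= a.
Proof. unfold Rabs; destruct (Rcase_abs x); lra. Qed.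

Lemma rsum_mono_n r T f : (r <= T)%nat -> (forall j, 0 <= f j) -> rsum r f <= rsum T f.
Proof. intros H Hf. induction T. replace r with O by lia. lra.
 destruct (Nat.eq_dec r (S T)). subst; lra. simpl. pose proof (Hf T). assert (rsum r f <= rsum T f) by (apply IHT; lia). lra. Qed.

Fixpoint mxf (n : nat) (f : nat -> R) : R :=
  match n with O => f O | S n' => Rmax (mxf n' f) (f n) end.
Fixpoint mnf (n : nat) (f : nat -> R) : R :=
  match n with O => f O | S n' => Rmin (mnf n' f) (f n) end.

Lemma mxf_ge n f j : (j <= n)%nat -> f j <= mxf n f.
Proof. induction n; simpl; intros H.
 - replace j with O by lia. lra.
 - destruct (Nat.eq_dec j (S n)). subst. apply Rmax_r.
   eapply Rle_trans. apply IHn. lia. apply Rmax_l. Qed.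

Lemma mnf_le n f j : (j <= n)%nat -> mnf n f <= f j.
Proof. induction n; simpl; intros H.
 - replace j with O by lia. lra.
 - destruct (Nat.eq_dec j (S n)). subst. apply Rmin_r.
   eapply Rle_trans. apply Rmin_l. apply IHn. lia. Qed.

Lemma mxf_ex n f : exists j, (j <= n)%nat /\ mxf n f = f j.
Proof. induction n; simpl.
 - exists O; auto.
 - destruct IHn as [j [Hj E]]. unfold Rmax. destruct (Rle_dec (mxf n f) (f (S n))).
   exists (S n); auto. exists j; split; auto. Qed.

Lemma mnf_ex n f : exists j, (j <= n)%nat /\ mnf n f = f j.
Proof. induction n; simpl.
 - exists O; auto.
 - destruct IHn as [j [Hj E]]. unfold Rmin. destruct (Rle_dec (mnf n f) (f (S n))).
   exists j; split; auto. exists (S n); auto. Qed.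

Fixpoint cntb (n : nat) (f : nat -> bool) : nat :=
  match n with O => O | S n' => (cntb n' f + if f n' then 1 else 0)%nat end.

Lemma cntb_le n f : (cntb n f <= n)%nat.
Proof. induction n; simpl; auto. destruct (f n); lia. Qed.

Lemma cntb_mono n f g : (forall i, (i < n)%nat -> f i = true -> g i = true) ->
  (cntb n f <= cntb n g)%nat.
Proof. induction n; simpl; intros H; auto.
 assert (cntb n f <= cntb n g)%nat by (apply IHn; intros; apply H; auto; lia).
 destruct (f n) eqn:Ef. rewrite (H n) by auto. lia. destruct (g n); lia. Qed.

Lemma cntb_strict n f g : (forall i, (i < n)%nat -> f i = true -> g i = true) ->
  forall i, (i < n)%nat -> f i = false -> g i = true ->
  (cntb n f + 1 <= cntb n g)%nat.
Proof. induction n; simpl; intros H i Hi Fi Gi; [lia|].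
 destruct (Nat.eq_dec i n).
 - subst. rewrite Fi, Gi. assert (cntb n f <= cntb n g)%nat by (apply cntb_mono; intros; apply H; auto; lia). lia.
 - assert (cntb n f + 1 <= cntb n g)%nat by (apply (IHn ltac:(intros; apply H; auto; lia) i); auto; lia).
   destruct (f n) eqn:Ef. rewrite (H n) by auto. lia. destruct (g n); lia. Qed.

Lemma cntb_full n f : (n <= cntb n f)%nat -> forall i, (i < n)%nat -> f i = true.
Proof. induction n; simpl; intros H i Hi; [lia|].
 pose proof (cntb_le n f). destruct (f n) eqn:Ef.
 - destruct (Nat.eq_dec i n). subst; auto. apply IHn; lia.
 - lia. Qed.

Lemma reach_lt I e a b : reach I e a b -> (b < I)%nat.
Proof. induction 1; auto. Qed.
Lemma reach_lt0 I e a b : reach I e a b -> (a < I)%nat.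
Proof. induction 1; auto. Qed.

Lemma reach_mono I (e e' : nat -> nat -> Prop) a b :
  (forall j i, e j i -> e' j i) -> reach I e a b -> reach I e' a b.
Proof. intros H. induction 1. constructor; auto. eapply reach_step; eauto. Qed.

Lemma reach_cross I e (P : nat -> Prop) a b : reach I e a b -> P a -> ~ P b ->
  exists j i, (j < I)%nat /\ (i < I)%nat /\ P j /\ ~ P i /\ e j i.
Proof. induction 1; intros Pa Pb. contradiction.
 destruct (classic (P b)).
 - exists b, c. repeat split; auto. eapply reach_lt; eauto.
 - apply IHreach; auto. Qed.

Section PL.
Variables (I B : nat) (E : nat -> nat -> nat -> Prop) (M : nat -> nat -> nat -> R)
  (c : nat -> nat -> R) (al be : R) (j0 : nat).
Hypothesis HBpos : (0 < B)%nat.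
Hypothesis HSC : forall k, strongly_connected I (fun j i => exists t, (k <= t <= k + B - 1)%nat /\ E t j i).
Hypothesis Hal : 0 < al.
Hypothesis HM0 : forall t i j, (i < I)%nat -> (j < I)%nat -> 0 <= M t i j.
Hypothesis HMd : forall t i, (i < I)%nat -> al <= M t i i.
Hypothesis HMe : forall t i j, (i < I)%nat -> (j < I)%nat -> E t j i -> al <= M t i j.
Hypothesis Hrec : forall t i, (i < I)%nat -> c (S t) i = rsum I (fun j => M t i j * c t j).
Hypothesis Hc0 : forall t i, (i < I)%nat -> 0 <= c t i.
Hypothesis Hj0 : (j0 < I)%nat.
Hypothesis Hbe : be <= c O j0.
Hypothesis Hbe0 : 0 <= be.

Definition good t i := al ^ t * be <= c t i.
Definition gb t i := if Rle_dec (al ^ t * be) (c t i) then true else false.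

Lemma gb_good t i : gb t i = true <-> good t i.
Proof. unfold gb, good. destruct (Rle_dec _ _); split; intros; auto; discriminate. Qed.

Lemma thr0 t : 0 <= al ^ t * be.
Proof. apply Rmult_le_pos; auto. apply pow_le; lra. Qed.

Lemma good_edge t j i : (i < I)%nat -> (j < I)%nat -> (j = i \/ E t j i) -> good t j -> good (S t) i.
Proof. intros Hi Hj He G. unfold good in *. rewrite Hrec by auto.
 eapply Rle_trans; [| apply (rsum_ge_term I (fun j => M t i j * c t j) j)]; auto.
 - simpl. assert (al <= M t i j) by (destruct He; [subst; auto| auto]).
   pose proof (thr0 t). replace (al * al ^ t * be) with (al * (al ^ t * be)) by ring.
   apply Rmult_le_compat; lra.
 - intros. apply Rmult_le_pos; auto. Qed.

Lemma good_later t i r : (i < I)%nat -> good t i -> good (t + r) i.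
Proof. intros Hi G. induction r. rewrite Nat.add_0_r; auto.
 replace (t + S r)%nat with (S (t + r)) by lia. eapply good_edge; eauto. Qed.

Lemma cntb_all n f : (forall i, (i < n)%nat -> f i = true) -> cntb n f = n.
Proof. induction n; simpl; intros H; auto. rewrite IHn by auto. rewrite H by lia. lia. Qed.

Lemma window n : (Nat.min I (S n) <= cntb I (gb (n * B)))%nat.
Proof. induction n.
 - simpl. assert (gb 0 j0 = true) by (apply gb_good; unfold good; simpl; lra).
   assert (cntb I (fun _ => false) + 1 <= cntb I (gb 0))%nat.
   { apply (cntb_strict I (fun _ => false) (gb 0)) with (i := j0); auto. intros; discriminate. }
   assert (cntb I (fun _ => false) = O) by (clear; induction I; simpl; auto; lia).
   lia.
 - assert (mono : forall i, (i < I)%nat -> gb (n * B) i = true -> gb (S n * B) i = true).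
   { intros i Hi G. apply gb_good in G. apply gb_good. replace (S n * B)%nat with (n * B + B)%nat by lia.
     apply good_later; auto. }
   destruct (Nat.lt_ge_cases (cntb I (gb (n * B))) I) as [Hlt|Hge].
   + assert (exists b, (b < I)%nat /\ gb (n * B) b = false).
     { apply NNPP. intros N. assert (cntb I (gb (n*B)) = I); [|lia].
       apply cntb_all. intros i Hi. destruct (gb (n*B) i) eqn:G; auto. exfalso; apply N; eauto. }
     destruct H as [b [Hb Gb]].
     assert (Ga : gb (n * B) j0 = true).
     { apply gb_good. replace (n * B)%nat with (0 + n * B)%nat by lia. apply good_later; auto.
       unfold good; simpl; lra. }
     destruct (reach_cross _ _ (fun i => gb (n*B) i = true) j0 b (HSC (n*B) j0 b Hj0 Hb) Ga
        ltac:(cbv beta; rewrite Gb; discriminate)) as [j [i [Hj [Hi [Pj [Pi [t [Ht Et]]]]]]]].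
     assert (gb (S n * B) i = true).
     { apply gb_good. apply gb_good in Pj.
       assert (good t j). { replace t with (n * B + (t - n * B))%nat by lia. apply good_later; auto. }
       assert (good (S t) i) by (apply (good_edge t j i); auto).
       replace (S n * B)%nat with (S t + (S n * B - S t))%nat by lia. apply good_later; auto. }
     assert (cntb I (gb (n * B)) + 1 <= cntb I (gb (S n * B)))%nat.
     { apply (cntb_strict _ _ _ mono i); auto. destruct (gb (n*B) i); auto. exfalso; auto. }
     lia.
   + assert (cntb I (gb (n * B)) <= cntb I (gb (S n * B)))%nat by (apply cntb_mono; auto). lia.
Qed.

Lemma PL : forall i, (i < I)%nat -> al ^ (I * B) * be <= c (I * B) i.
Proof. intros i Hi. pose proof (window I). rewrite Nat.min_l in H by lia.
 apply (gb_good (I * B) i). apply cntb_full with (n := I); auto. Qed.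
End PL.

Section WL.
Variables (I k j0 : nat) (W : nat -> nat -> nat -> R) (y e : nat -> nat -> R) (g : nat -> R) (U : R).
Hypothesis Hy : forall n i, (i < I)%nat ->
  y (S (k + n)) i = rsum I (fun j => W (k + n) i j * y (k + n) j) + e (k + n) i.
Hypothesis HW0 : forall t i j, (i < I)%nat -> (j < I)%nat -> 0 <= W t i j.
Hypothesis HWs : forall t i, (i < I)%nat -> rsum I (fun j => W t i j) = 1.
Hypothesis He : forall t i, (i < I)%nat -> Rabs (e t i) <= g t.
Hypothesis HU : forall i, (i < I)%nat -> y k i <= U.
Hypothesis Hj0 : (j0 < I)%nat.

Fixpoint wt (n i : nat) : R :=
  match n with O => if Nat.eq_dec i j0 then 1 else 0
  | S n' => rsum I (fun j => W (k + n') i j * wt n' j) end.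

Lemma wt_nonneg n i : (i < I)%nat -> 0 <= wt n i.
Proof. revert i; induction n; intros i Hi; simpl.
 destruct (Nat.eq_dec i j0); lra.
 apply rsum_nonneg. intros. apply Rmult_le_pos; auto. Qed.

Lemma WL n i : (i < I)%nat ->
  y (k + n)%nat i <= U + rsum n (fun s => g (k + s)%nat) - wt n i * (U - y k j0).
Proof. revert i; induction n; intros i Hi.
 - simpl. rewrite Nat.add_0_r. destruct (Nat.eq_dec i j0). subst; lra.
   pose proof (HU i Hi). lra.
 - replace (k + S n)%nat with (S (k + n)) by lia. rewrite Hy by auto.
   set (G := rsum n (fun s => g (k + s)%nat)). set (D := U - y k j0).
   assert (rsum I (fun j => W (k + n)%nat i j * y (k + n)%nat j) <=
           rsum I (fun j => (U + G) * W (k + n)%nat i j + (- D) * (W (k+n)%nat i j * wt n j))).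
   { apply rsum_le. intros j Hj. pose proof (IHn j Hj). pose proof (HW0 (k+n) i j Hi Hj).
     fold G D in H. replace ((U + G) * W (k + n)%nat i j + - D * (W (k + n)%nat i j * wt n j))
       with (W (k + n)%nat i j * (U + G - wt n j * D)) by ring.
     apply Rmult_le_compat_l; auto. }
   rewrite rsum_plus, !rsum_scal, HWs in H by auto.
   pose proof (He (k+n) i Hi). apply Rabs_le_bt in H0. simpl rsum. simpl wt. fold G D.
   lra.
Qed.
End WL.

Lemma CL (D h : nat -> R) (T : nat) (rho : R) :
  (forall k, 0 <= D k) -> (0 < T)%nat -> 0 <= rho < 1 -> Un_cv h 0 ->
  (forall k, D (k + T)%nat <= rho * D k + h k) ->
  (forall k r, (r <= T)%nat -> D (k + r)%nat <= D k + h k) ->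
  Un_cv D 0.
Proof.
 intros HD HT Hr Hh H1 H2 eps Heps.
 set (e1 := eps * (1 - rho) / 3).
 assert (He1 : 0 < e1) by (unfold e1; apply Rmult_lt_0_compat; [apply Rmult_lt_0_compat|]; lra).
 destruct (Hh e1 He1) as [K HK].
 assert (HK' : forall k, (k >= K)%nat -> h k < e1).
 { intros k Hk. specialize (HK k Hk). unfold R_dist in HK. rewrite Rminus_0_r in HK.
   pose proof (Rle_abs (h k)). lra. }
 assert (Hn : forall n, D (K + n * T)%nat <= rho ^ n * D K + eps / 3).
 { induction n. simpl. rewrite Nat.add_0_r. lra.
   replace (K + S n * T)%nat with ((K + n * T) + T)%nat by lia.
   eapply Rle_trans. apply H1. pose proof (HK' (K + n*T)%nat ltac:(lia)).
   simpl. assert (rho * D (K + n*T)%nat <= rho * (rho ^ n * D K + eps / 3)) by (apply Rmult_le_compat_l; lra).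
   assert (rho * (eps/3) + e1 = eps / 3) by (unfold e1; field). nra. }
 assert (Hq : 0 < eps / 3 / (D K + 1)).
 { apply Rdiv_lt_0_compat. lra. pose proof (HD K); lra. }
 destruct (pow_lt_1_zero rho ltac:(rewrite Rabs_right; lra) _ Hq) as [N HN].
 exists (K + N * T)%nat. intros k Hk. unfold R_dist. rewrite Rminus_0_r, Rabs_right by (apply Rle_ge; auto).
 set (n := ((k - K) / T)%nat). set (r := ((k - K) mod T)%nat).
 assert (Edm : (k - K = T * n + r)%nat) by (apply Nat.div_mod; lia).
 assert (r < T)%nat by (apply Nat.mod_upper_bound; lia).
 assert (n >= N)%nat.
 { unfold n. apply Nat.div_le_lower_bound. lia. nia. }
 replace k with ((K + n * T) + r)%nat by lia.
 eapply Rle_lt_trans. apply H2. lia.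
 pose proof (HK' (K + n * T)%nat ltac:(lia)). pose proof (Hn n).
 specialize (HN n H0). rewrite Rabs_right in HN by (apply Rle_ge, pow_le; lra).
 assert (rho ^ n * D K <= rho ^ n * (D K + 1)) by (pose proof (pow_le rho n); nra).
 assert (rho ^ n * (D K + 1) < eps / 3).
 { apply (Rmult_lt_compat_r (D K + 1)) in HN.
   replace (eps / 3 / (D K + 1) * (D K + 1)) with (eps/3) in HN. lra. field. pose proof (HD K); lra. pose proof (HD K); lra. }
 assert (e1 <= eps / 3) by (unfold e1; assert (0 <= eps * rho) by (apply Rmult_le_pos; lra); lra).
 lra.
Qed.

Lemma rsum_sq_nonneg m v : 0 <= rsum m (fun c => v c * v c).
Proof. apply rsum_nonneg. intros. apply Rle_0_sqr. Qed.

Lemma vnorm_ge0 m v : 0 <= vnorm m v.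
Proof. apply sqrt_pos. Qed.

Lemma vnorm_le_sumabs m v : vnorm m v <= rsum m (fun c => Rabs (v c)).
Proof. unfold vnorm. induction m; simpl.
 - rewrite sqrt_0. lra.
 - pose proof (rsum_sq_nonneg m v). set (S := rsum m (fun c => v c * v c)) in *.
   assert (sqrt (S + v m * v m) <= sqrt S + Rabs (v m)).
   { apply sqrt_le_1_alt' || idtac.
     rewrite <- (sqrt_Rsqr (sqrt S + Rabs (v m))).
     apply sqrt_le_1_alt. unfold Rsqr. pose proof (sqrt_pos S). pose proof (Rabs_pos (v m)).
     rewrite <- (Rabs_mult (v m) (v m)) at 1 || idtac.
     assert (sqrt S * sqrt S = S) by (apply sqrt_sqrt; auto).
     assert (Rabs (v m) * Rabs (v m) = v m * v m) by (rewrite <- Rabs_mult; apply Rabs_right; apply Rle_ge, Rle_0_sqr).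
     nra. pose proof (sqrt_pos S). pose proof (Rabs_pos (v m)). lra. }
   lra. Qed.

Lemma abs_le_vnorm m v c : (c < m)%nat -> Rabs (v c) <= vnorm m v.
Proof. intros Hc. unfold vnorm. rewrite <- sqrt_Rsqr_abs. apply sqrt_le_1_alt.
 unfold Rsqr. apply (rsum_ge_term m (fun c => v c * v c)); auto. intros; apply Rle_0_sqr. Qed.

Lemma cv_squeeze f g : (forall n, 0 <= f n <= g n) -> Un_cv g 0 -> Un_cv f 0.
Proof. intros H Hg eps He. destruct (Hg eps He) as [N HN]. exists N. intros n Hn.
 specialize (HN n Hn). specialize (H n). unfold R_dist in *. rewrite Rminus_0_r in *.
 rewrite Rabs_right in * by lra. lra. Qed.

Lemma cv_rsum n (F : nat -> nat -> R) : (forall j, (j < n)%nat -> Un_cv (F j) 0) ->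
  Un_cv (fun k => rsum n (fun j => F j k)) 0.
Proof. induction n; intros H; simpl.
 - intros eps He; exists O; intros; unfold R_dist; rewrite Rminus_0_r, Rabs_R0; lra.
 - replace 0 with (0 + 0) by lra. apply CV_plus. apply IHn; intros; apply H; lia. apply H; lia. Qed.

Lemma cv_scal r f : Un_cv f 0 -> Un_cv (fun k => r * f k) 0.
Proof. intros H. replace 0 with (r * 0) by lra. apply CV_mult; auto.
 intros eps He; exists O; intros; unfold R_dist; rewrite Rminus_eq_0, Rabs_R0; lra. Qed.

Lemma cv_shift g s : Un_cv g 0 -> Un_cv (fun k => g (k + s)%nat) 0.
Proof. intros H eps He. destruct (H eps He) as [N HN]. exists N. intros n Hn. apply HN. lia. Qed.

Lemma cv_winsum g T : Un_cv g 0 -> Un_cv (fun k => rsum T (fun s => g (k + s)%nat)) 0.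
Proof. intros H. apply (cv_rsum T (fun s k => g (k + s)%nat)). intros. apply cv_shift; auto. Qed.

Section Main.
Variables (I m : nat) (E : digraph_seq) (A : nat -> nat -> nat -> R) (kappa : R)
  (u : nat -> nat -> nat -> R) (phi : nat -> nat -> R) (x : nat -> nat -> nat -> R).
Hypothesis Hkappa : 0 < kappa.
Hypothesis Hcomp : forall k, compliant I kappa E A k.
Hypothesis Hstoch : forall k, column_stochastic I A k.
Hypothesis Hphi0 : forall i, (i < I)%nat -> phi i 0%nat = 1.
Hypothesis Hx0 : forall i c, (i < I)%nat -> (c < m)%nat -> x i 0%nat c = u i 0%nat c.
Hypothesis Hphi : forall i k, (i < I)%nat -> phi i (S k) = rsum I (fun j => A k i j * phi j k).
Hypothesis Hx : forall i k c, (i < I)%nat -> (c < m)%nat ->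
     x i (S k) c = / phi i (S k) * rsum I (fun j => A k i j * phi j k * x j k c)
       + / phi i (S k) * (u i (S k) c - u i k c).
Hypothesis HI : (0 < I)%nat.

Lemma A0 k i j : (i < I)%nat -> (j < I)%nat -> 0 <= A k i j.
Proof. apply (Hstoch k). Qed.
Lemma Adiag k i : (i < I)%nat -> kappa <= A k i i.
Proof. intros. destruct (Hcomp k) as [_ [_ H3]]. apply Rge_le, H3; auto. Qed.
Lemma Aedge k i j : (i < I)%nat -> (j < I)%nat -> E k j i -> kappa <= A k i j.
Proof. intros. destruct (Hcomp k) as [_ [H2 _]]. apply Rge_le, H2; auto. Qed.
Lemma Acol k j : (j < I)%nat -> rsum I (fun i => A k i j) = 1.
Proof. apply (Hstoch k). Qed.

Lemma kappa_le1 : kappa <= 1.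
Proof. rewrite <- (Acol 0 0) by auto. eapply Rle_trans. apply (Adiag 0 0); auto.
 apply (rsum_ge_term I (fun i => A 0 i 0)); auto. intros; apply A0; auto. Qed.

Lemma phi_pos k i : (i < I)%nat -> 0 < phi i k.
Proof. revert i; induction k; intros i Hi. rewrite Hphi0; auto; lra.
 rewrite Hphi by auto. eapply Rlt_le_trans; [|apply (rsum_ge_term I (fun j => A k i j * phi j k) i)]; auto.
 apply Rmult_lt_0_compat; auto. pose proof (Adiag k i Hi); lra.
 intros. apply Rmult_le_pos. apply A0; auto. apply Rlt_le; auto. Qed.

Lemma phi_sum k : rsum I (fun i => phi i k) = INR I.
Proof. induction k.
 - rewrite (rsum_ext _ _ (fun _ => 1)) by auto. rewrite rsum_const; lra.
 - rewrite (rsum_ext _ _ (fun i => rsum I (fun j => A k i j * phi j k))) by auto.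
   rewrite rsum_exchange. rewrite <- IHk. apply rsum_ext. intros j Hj.
   rewrite (rsum_ext _ _ (fun i => phi j k * A k i j)) by (intros; ring).
   rewrite rsum_scal, Acol by auto. ring. Qed.

Lemma phi_le k i : (i < I)%nat -> phi i k <= INR I.
Proof. intros Hi. rewrite <- (phi_sum k). apply (rsum_ge_term I (fun i => phi i k)); auto.
 intros; apply Rlt_le, phi_pos; auto. Qed.

Lemma partA k c : (c < m)%nat -> rsum I (fun i => phi i k * x i k c) = rsum I (fun i => u i k c).
Proof. intros Hc. induction k.
 - apply rsum_ext. intros. rewrite Hphi0, Hx0; auto; ring.
 - rewrite (rsum_ext _ _ (fun i => rsum I (fun j => A k i j * phi j k * x j k c) + (u i (S k) c - u i k c))).
   2:{ intros i Hi. rewrite Hx by auto. pose proof (phi_pos (S k) i Hi). field. lra. }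
   rewrite rsum_plus, rsum_exchange.
   rewrite (rsum_ext _ (fun j => rsum I (fun i => A k i j * phi j k * x j k c)) (fun j => phi j k * x j k c)).
   2:{ intros j Hj. rewrite (rsum_ext _ _ (fun i => (phi j k * x j k c) * A k i j)) by (intros; ring).
       rewrite rsum_scal, Acol by auto. ring. }
   rewrite IHk. rewrite (rsum_ext _ (fun i => u i (S k) c - u i k c) (fun i => u i (S k) c + - u i k c)) by (intros; ring).
   rewrite rsum_plus, rsum_opp. ring. Qed.
Variable B : nat.
Hypothesis HBpos : (0 < B)%nat.
Hypothesis HSC : forall k, strongly_connected I (fun j i => exists t, (k <= t <= k + B - 1)%nat /\ E t j i).

Lemma pow_decr (a : R) p q : 0 <= a <= 1 -> (p <= q)%nat -> a ^ q <= a ^ p.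
Proof. intros Ha Hpq. replace q with (p + (q - p))%nat by lia. rewrite pow_add.
 assert (a ^ (q - p) <= 1) by (apply pow_le1 || (induction (q-p)%nat; simpl; nra)).
 pose proof (pow_le a p ltac:(lra)). nra. Qed.

Lemma HSC_shift k0 n : strongly_connected I (fun j i => exists t, (n <= t <= n + B - 1)%nat /\ E (k0 + t)%nat j i).
Proof. intros a b Ha Hb. eapply reach_mono; [|apply (HSC (k0 + n) a b Ha Hb)].
 intros j i [t [Ht Et]]. exists (t - k0)%nat. split. lia. replace (k0 + (t - k0))%nat with t by lia. auto. Qed.

Definition eta := kappa ^ (I * B).

Lemma eta_pos : 0 < eta.
Proof. apply pow_lt; auto. Qed.

Lemma phi_lb k i : (i < I)%nat -> eta <= phi i k.
Proof. intros Hi. pose proof kappa_le1.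
 destruct (Nat.lt_ge_cases k (I * B)) as [Hk|Hk].
 - assert (kappa ^ k <= phi i k).
   { clear Hk. induction k. rewrite Hphi0; auto; simpl; lra.
     rewrite Hphi by auto. eapply Rle_trans; [|apply (rsum_ge_term I (fun j => A k i j * phi j k) i)]; auto.
     simpl. apply Rmult_le_compat; auto. lra. apply pow_le; lra. apply Adiag; auto.
     intros. apply Rmult_le_pos. apply A0; auto. apply Rlt_le, phi_pos; auto. }
   eapply Rle_trans; [|apply H0]. apply pow_decr; lra || lia.
 - set (k0 := (k - I * B)%nat). replace k with (k0 + I * B)%nat by lia.
   destruct (mxf_ex (I - 1) (fun j => phi j k0)) as [j0 [Hj0 Ej0]].
   assert (1 <= phi j0 k0).
   { assert (rsum I (fun j => phi j k0) <= rsum I (fun _ => mxf (I-1) (fun j => phi j k0))).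
     { apply rsum_le. intros. apply (mxf_ge (I-1) (fun j => phi j k0)). lia. }
     rewrite phi_sum, rsum_const in H0. rewrite Ej0 in H0.
     assert (0 < INR I) by (apply lt_0_INR; auto).
     apply (Rmult_le_reg_l (INR I)); auto. lra. }
   assert (H1 := PL I B (fun t => E (k0 + t)%nat) (fun t => A (k0 + t)%nat) (fun t j => phi j (k0 + t)%nat)
      kappa (phi j0 k0) j0 HBpos (HSC_shift k0) Hkappa).
   eapply Rle_trans; [| apply H1]; auto.
   + unfold eta. pose proof (pow_le kappa (I * B) ltac:(lra)). nra.
   + intros; apply A0; auto.
   + intros; apply Adiag; auto.
   + intros; apply Aedge; auto.
   + intros. replace (k0 + S t)%nat with (S (k0 + t)) by lia. apply Hphi; auto.
   + intros; apply Rlt_le, phi_pos; auto.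
   + lia.
   + rewrite Nat.add_0_r; lra.
   + lra.
Qed.

Definition W t i j := A t i j * phi j t / phi i (S t).
Definition ee c t i := (u i (S t) c - u i t c) / phi i (S t).
Definition g t := / eta * rsum I (fun i => vnorm m (fun c => u i (S t) c - u i t c)).
Definition al := kappa * eta / INR I.

Lemma x_rec c t i : (i < I)%nat -> (c < m)%nat ->
  x i (S t) c = rsum I (fun j => W t i j * x j t c) + ee c t i.
Proof. intros Hi Hc. rewrite Hx by auto. unfold W, ee.
 rewrite (rsum_ext _ (fun j => A t i j * phi j t / phi i (S t) * x j t c) (fun j => / phi i (S t) * (A t i j * phi j t * x j t c))) by (intros; unfold Rdiv; ring).
 rewrite rsum_scal. unfold Rdiv. ring. Qed.

Lemma W0 t i j : (i < I)%nat -> (j < I)%nat -> 0 <= W t i j.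
Proof. intros. unfold W. apply Rmult_le_pos. apply Rmult_le_pos. apply A0; auto. apply Rlt_le, phi_pos; auto.
 apply Rlt_le, Rinv_0_lt_compat, phi_pos; auto. Qed.

Lemma Ws t i : (i < I)%nat -> rsum I (fun j => W t i j) = 1.
Proof. intros. unfold W. unfold Rdiv. rewrite (rsum_ext _ _ (fun j => / phi i (S t) * (A t i j * phi j t))) by (intros; ring).
 rewrite rsum_scal, <- Hphi by auto. pose proof (phi_pos (S t) i H). field. lra. Qed.

Lemma al_pos : 0 < al.
Proof. unfold al. apply Rdiv_lt_0_compat. apply Rmult_lt_0_compat; auto. apply eta_pos. apply lt_0_INR; auto. Qed.

Lemma W_lb t i j : (i < I)%nat -> (j < I)%nat -> kappa <= A t i j -> al <= W t i j.
Proof. intros Hi Hj Ha. unfold W, al, Rdiv. pose proof (phi_lb t j Hj). pose proof eta_pos.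
 pose proof (phi_le (S t) i Hi). pose proof (phi_pos (S t) i Hi).
 apply Rmult_le_compat. apply Rmult_le_pos; lra. apply Rlt_le, Rinv_0_lt_compat, lt_0_INR; auto.
 apply Rmult_le_compat; lra. apply Rinv_le_contravar; auto. Qed.

Lemma ee_bound c t i : (i < I)%nat -> (c < m)%nat -> Rabs (ee c t i) <= g t.
Proof. intros Hi Hc. unfold ee, g, Rdiv. rewrite Rabs_mult.
 pose proof (phi_lb (S t) i Hi). pose proof eta_pos. pose proof (phi_pos (S t) i Hi).
 rewrite (Rabs_right (/ _)) by (apply Rle_ge, Rlt_le, Rinv_0_lt_compat; lra).
 rewrite Rmult_comm. apply Rmult_le_compat. apply Rlt_le, Rinv_0_lt_compat; lra. apply Rabs_pos.
 apply Rinv_le_contravar; lra.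
 eapply Rle_trans. apply (abs_le_vnorm m (fun c => u i (S t) c - u i t c) c Hc).
 apply (rsum_ge_term I (fun i => vnorm m (fun c => u i (S t) c - u i t c))); auto.
 intros; apply vnorm_ge0. Qed.

Lemma g_nonneg t : 0 <= g t.
Proof. unfold g. apply Rmult_le_pos. apply Rlt_le, Rinv_0_lt_compat, eta_pos.
 apply rsum_nonneg; intros; apply vnorm_ge0. Qed.

Definition D c k := mxf (I - 1) (fun i => x i k c) - mnf (I - 1) (fun i => x i k c).
Definition dl := al ^ (I * B).

Lemma wt_lb k j0 i : (j0 < I)%nat -> (i < I)%nat -> dl <= wt I k j0 W (I * B) i.
Proof. intros Hj0 Hi. unfold dl. rewrite <- (Rmult_1_r (al ^ _)).
 apply (PL I B (fun t => E (k + t)%nat) (fun t => W (k + t)%nat) (fun n i => wt I k j0 W n i) al 1 j0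
   HBpos (HSC_shift k) al_pos); auto.
 - intros; apply W0; auto.
 - intros; apply W_lb; auto. apply Adiag; auto.
 - intros; apply W_lb; auto. apply Aedge; auto.
 - intros. apply wt_nonneg; auto. intros; apply W0; auto.
 - cbn [wt]. destruct (Nat.eq_dec j0 j0) as [_|nn]; [lra|congruence].
 - lra.
Qed.

Lemma KL c k n : (c < m)%nat ->
  D c (k + n) <= D c k * (1 - (if Nat.eq_dec n (I * B) then 2 * dl else 0))
                 + 2 * rsum n (fun s => g (k + s)%nat).
Proof. intros Hc.
 set (U := mxf (I - 1) (fun i => x i k c)). set (L := mnf (I - 1) (fun i => x i k c)).
 destruct (mnf_ex (I-1) (fun i => x i k c)) as [j0 [Hj0 E0]].
 destruct (mxf_ex (I-1) (fun i => x i k c)) as [j1 [Hj1 E1]].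
 fold U L in E0, E1.
 assert (Up : forall i, (i < I)%nat -> x i (k + n)%nat c <= U + rsum n (fun s => g (k + s)%nat) - wt I k j0 W n i * (U - L)).
 { intros i Hi. rewrite E0.
   apply (WL I k j0 W (fun t i => x i t c) (fun t i => ee c t i) g U); auto.
   - intros; apply x_rec; auto.
   - intros; apply W0; auto.
   - intros; apply Ws; auto.
   - intros; apply ee_bound; auto.
   - intros. apply (mxf_ge (I-1) (fun i => x i k c)). lia.
   - lia. }
 assert (Lo : forall i, (i < I)%nat -> - x i (k + n)%nat c <= - L + rsum n (fun s => g (k + s)%nat) - wt I k j1 W n i * (- L - - U)).
 { intros i Hi. rewrite E1.
   apply (WL I k j1 W (fun t i => - x i t c) (fun t i => - ee c t i) g (- L)); auto.
   - intros. rewrite x_rec by auto. rewrite Ropp_plus_distr. f_equal. rewrite <- rsum_opp. apply rsum_ext; intros; ring.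
   - intros; apply W0; auto.
   - intros; apply Ws; auto.
   - intros. rewrite Rabs_Ropp. apply ee_bound; auto.
   - intros. apply Ropp_le_contravar. apply (mnf_le (I-1) (fun i => x i k c)). lia.
   - lia. }
 unfold D. fold U L.
 destruct (mnf_ex (I-1) (fun i => x i (k + n)%nat c)) as [l [Hl El]].
 destruct (mxf_ex (I-1) (fun i => x i (k + n)%nat c)) as [i [Hi Ei]].
 rewrite El, Ei.
 assert (Hi' : (i < I)%nat) by lia. assert (Hl' : (l < I)%nat) by lia.
 specialize (Up i Hi'). specialize (Lo l Hl').
 assert (UL : L <= U) by (rewrite E0; apply (mxf_ge (I-1) (fun i => x i k c)); lia).
 pose proof (wt_nonneg I k j0 W ltac:(intros; apply W0; auto) n i Hi').
 pose proof (wt_nonneg I k j1 W ltac:(intros; apply W0; auto) n l Hl').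
 destruct (Nat.eq_dec n (I * B)).
 - subst n. pose proof (wt_lb k j0 i ltac:(lia) Hi'). pose proof (wt_lb k j1 l ltac:(lia) Hl'). nra.
 - nra.
Qed.

Lemma D_nonneg c k : 0 <= D c k.
Proof. unfold D. pose proof (mnf_le (I-1) (fun i => x i k c) 0 ltac:(lia)).
 pose proof (mxf_ge (I-1) (fun i => x i k c) 0 ltac:(lia)). lra. Qed.

Lemma dl_pos : 0 < dl.
Proof. apply pow_lt, al_pos. Qed.

Lemma D_cv c : (c < m)%nat -> Un_cv g 0 -> Un_cv (D c) 0.
Proof. intros Hc Hg. pose proof dl_pos.
 set (d' := Rmin dl (1/4)).
 assert (0 < d' <= dl /\ d' <= 1/4).
 { unfold d'. split; [split|]. apply Rmin_glb_lt; lra. apply Rmin_l. apply Rmin_r. }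
 apply (CL (D c) (fun k => 2 * rsum (I * B) (fun s => g (k + s)%nat)) (I * B) (1 - 2 * d')).
 - intros; apply D_nonneg.
 - lia.
 - lra.
 - apply cv_scal, cv_winsum; auto.
 - intros k. pose proof (KL c k (I * B) Hc). destruct (Nat.eq_dec (I*B) (I*B)); [|congruence].
   pose proof (D_nonneg c k). nra.
 - intros k r Hr. pose proof (KL c k r Hc).
   assert (rsum r (fun s => g (k + s)%nat) <= rsum (I * B) (fun s => g (k + s)%nat))
     by (apply rsum_mono_n; auto; intros; apply g_nonneg).
   pose proof (D_nonneg c k). destruct (Nat.eq_dec r (I*B)); nra.
Qed.

Lemma partB : (forall i, (i < I)%nat ->
      Un_cv (fun k => vnorm m (fun c => u i (S k) c - u i k c)) 0) ->
   forall i, (i < I)%nat ->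
      Un_cv (fun k => vnorm m (fun c => x i k c - / INR I * rsum I (fun j => u j k c))) 0.
Proof. intros Hu i Hi.
 assert (Hg : Un_cv g 0).
 { unfold g. apply cv_scal. apply (cv_rsum I (fun j k => vnorm m (fun c => u j (S k) c - u j k c))). auto. }
 apply cv_squeeze with (g := fun k => rsum m (fun c => D c k)).
 2:{ apply (cv_rsum m (fun c k => D c k)). intros; apply D_cv; auto. }
 intros k. split. apply vnorm_ge0. eapply Rle_trans. apply vnorm_le_sumabs.
 apply rsum_le. intros c Hc. unfold D.
 set (U := mxf (I - 1) (fun i => x i k c)). set (L := mnf (I - 1) (fun i => x i k c)).
 assert (HU : forall j, (j < I)%nat -> x j k c <= U) by (intros; apply (mxf_ge (I-1) (fun i => x i k c)); lia).
 assert (HL : forall j, (j < I)%nat -> L <= x j k c) by (intros; apply (mnf_le (I-1) (fun i => x i k c)); lia).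
 rewrite <- (partA k c Hc).
 assert (S1 : rsum I (fun j => phi j k * x j k c) <= U * INR I).
 { rewrite <- (phi_sum k), <- rsum_scal. apply rsum_le. intros j Hj. pose proof (phi_pos k j Hj).
   specialize (HU j Hj). nra. }
 assert (S2 : L * INR I <= rsum I (fun j => phi j k * x j k c)).
 { rewrite <- (phi_sum k), <- rsum_scal. apply rsum_le. intros j Hj. pose proof (phi_pos k j Hj).
   specialize (HL j Hj). nra. }
 assert (HIp : 0 < INR I) by (apply lt_0_INR; auto).
 assert (/ INR I * rsum I (fun j => phi j k * x j k c) <= U).
 { apply (Rmult_le_reg_l (INR I)); auto. rewrite <- Rmult_assoc, Rinv_r by lra. lra. }
 assert (L <= / INR I * rsum I (fun j => phi j k * x j k c)).
 { apply (Rmult_le_reg_l (INR I)); auto. rewrite <- Rmult_assoc, Rinv_r by lra. lra. }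
 pose proof (HU i Hi). pose proof (HL i Hi).
 apply Rabs_le. lra.
Qed.

End Main.

Theorem mainTheorem13
  (I m : nat) (E : digraph_seq) (A : nat -> nat -> nat -> R) (kappa : R)
  (u : nat -> nat -> nat -> R)
  (phi : nat -> nat -> R) (x : nat -> nat -> nat -> R)
  (Hkappa : 0 < kappa)
  (HB : B_strongly_connected I E)
  (Hcomp : forall k, compliant I kappa E A k)
  (Hstoch : forall k, column_stochastic I A k)
  (Hphi0 : forall i, (i < I)%nat -> phi i 0%nat = 1)
  (Hx0 : forall i c, (i < I)%nat -> (c < m)%nat -> x i 0%nat c = u i 0%nat c)
  (Hphi : forall i k, (i < I)%nat ->
     phi i (S k) = rsum I (fun j => A k i j * phi j k))
  (Hx : forall i k c, (i < I)%nat -> (c < m)%nat ->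
     x i (S k) c =
       / phi i (S k) * rsum I (fun j => A k i j * phi j k * x j k c)
       + / phi i (S k) * (u i (S k) c - u i k c)) :
  (forall k c, (c < m)%nat ->
     rsum I (fun i => phi i k * x i k c) = rsum I (fun i => u i k c)) /\
  ((forall i, (i < I)%nat ->
      Un_cv (fun k => vnorm m (fun c => u i (S k) c - u i k c)) 0) ->
   forall i, (i < I)%nat ->
      Un_cv (fun k => vnorm m (fun c => x i k c - / INR I * rsum I (fun j => u j k c))) 0).
Proof.
  split.
  - exact (partA I m E A kappa u phi x Hkappa Hcomp Hstoch Hphi0 Hx0 Hphi Hx).
  - intros Hu i Hi. destruct HB as [B [HBpos HSC]].
    exact (partB I m E A kappa u phi x Hkappa Hcomp Hstoch Hphi0 Hx0 Hphi Hx
             ltac:(lia) B HBpos HSC Hu i Hi).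
Qed.
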